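(* Let $M_n$ be endowed with any norm, let $\phi: M_n\to M_n$ be a linear map that is contractive with respect to this norm, and let $\psi$ be an idempotent map ($\psi\circ\psi=\psi$) that is a limit point of the sequence of iterates $(\phi^k)_{k\ge1}$. Then \[ \lim_{k\to\infty}\|\phi^k-\phi^k\circ\psi\| = 0. \]
   Context: $M_n$ denotes the $n\times n$ complex matrices; $\phi^k$ is the $k$-fold composition of $\phi$ with itself; $\|\cdot\|$ is any norm on the space of linear maps $M_n\to M_n$. *)

(* Defs.v *)
From HB Require Import structures.
From mathcomp Require Import all_boot all_order all_algebra.
From mathcomp Require Import reals.
From mathcomp Require Export complex.
Set Implicit Arguments. Unset Strict Implicit. Unset Printing Implicit Defensive.
Import Order.TTheory GRing.Theory Num.Theory.
Local Open Scope ring_scope.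

Definition is_norm (R : rcfType) (V : lmodType R[i]) (N : V -> R) : Prop :=
  [/\ forall x : V, 0 <= N x,
      forall x : V, N x = 0 -> x = 0,
      forall (c : R[i]) (x : V), N (c *: x) = Normc.normc c * N x &
      forall x y : V, N (x + y) <= N x + N y].

(* A norm on the complex vector space of linear maps V -> V
   (maps represented as functions; the axioms only concern linear maps,
   with pointwise operations). *)
Definition is_map_norm (R : rcfType) (V : lmodType R[i])
    (Nop : (V -> V) -> R) : Prop :=
  [/\ forall f : V -> V, linear f -> 0 <= Nop f,
      forall f : V -> V, linear f -> Nop f = 0 -> forall x, f x = 0,
      forall (c : R[i]) (f : V -> V), linear f ->
        Nop (fun x => c *: f x) = Normc.normc c * Nop f &
      forall f g : V -> V, linear f -> linear g ->
        Nop (fun x => f x + g x) <= Nop f + Nop g].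

Definition limit_point_of_iterates (R : rcfType) (V : lmodType R[i])
    (Nop : (V -> V) -> R) (phi psi : V -> V) : Prop :=
  forall eps : R, 0 < eps -> forall K : nat, exists k : nat,
    [/\ (1 <= k)%N, (K <= k)%N &
        Nop (fun x => iter k phi x - psi x) < eps].

(* Main.v *)
Require Import Defs.
From HB Require Import structures.
From mathcomp Require Import all_boot all_order all_algebra.
From mathcomp Require Import reals complex.
From mathcomp Require Import boolp classical_sets topology normedtype derive.
From mathcomp Require Import ring lra.
Import Order.TTheory GRing.Theory Num.Theory.
Import numFieldTopology.Exports numFieldNormedType.Exports.
Local Open Scope ring_scope.

Lemma coord_bound (R : realType) m (P : 'rV[R]_m -> R) :
 (forall x, 0 <= P x) -> (forall x, P x = 0 -> x = 0) ->
 (forall (r : R) x, P (r *: x) = `|r| * P x) -> (forall x y, P (x + y) <= P x + P y) ->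
 exists c : R, 0 <= c /\ forall (x : 'rV[R]_m) i, `|x ord0 i| <= c * P x.
Proof.
case: m P => [|m] P P0 Pdef PZ PD.
  by exists 0; split=> // x [].
have Pz : P 0 = 0 by rewrite -(scale0r (0 : 'rV[R]_m.+1)) PZ normr0 mul0r.
have Psum : forall (I: Type) (r : seq I) (F : I -> 'rV_m.+1),
    P (\sum_(i <- r) F i) <= \sum_(i <- r) P (F i).
  move=> I r F; elim: r => [|a r IH]; first by rewrite !big_nil Pz.
  by rewrite !big_cons (le_trans (PD _ _)) // lerD2l.
set M := \sum_(j < m.+1) P (delta_mx 0 j).
have M0 : 0 <= M by apply: sumr_ge0 => j _.
have xle : forall (x : 'rV[R]_m.+1) j, `|x 0 j| <= `|x|.
  move=> x j; rewrite [leRHS]/Num.Def.normr /= mx_normrE; apply/bigmax_geP; right.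
  by exists (0, j).
have Pub : forall x, P x <= `|x| * M.
  move=> x; rewrite {1}(row_sum_delta x); apply: le_trans (Psum _ _ _) _.
  rewrite /M big_distrr /=; apply: ler_sum => j _; rewrite PZ ler_wpM2r //.
have PN : forall x, P (- x) = P x by move=> x; rewrite -scaleN1r PZ normrN normr1 mul1r.
have Pdist : forall x t, `|P x - P t| <= P (x - t).
  move=> x t; rewrite ler_norml; apply/andP; split.
    have := PD (t - x) x; rewrite subrK -opprB PN; lra.
  have := PD (x - t) t; rewrite subrK; lra.
have Pcont : continuous (P : 'rV[R]_m.+1 -> R).
  move=> x; apply/(@cvgrPdist_lt _ _ _ (nbhs x) _) => e e0; apply/(@nbhs_normP R ('rV[R]_m.+1 : normedModType R)).
  exists (e / (M + 1)); first by rewrite /= divr_gt0 // ltr_wpDl.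
  move=> t /= Hxt; apply: le_lt_trans (Pdist _ _) _; apply: le_lt_trans (Pub _) _.
  have M1 : 0 < M + 1 by rewrite ltr_wpDl.
  apply: (@le_lt_trans _ _ (`|x - t| * (M + 1))); first by rewrite ler_wpM2l // lerDl.
  by rewrite -ltr_pdivlMr.
set S := [set x : 'rV[R]_m.+1 | `|x| = 1]%classic.
have S0 : (S !=set0)%classic.
  set d := (delta_mx 0 0 : 'rV[R]_m.+1).
  have d0 : d != 0 by apply/eqP => /matrixP /(_ 0 0); rewrite !mxE /= => /eqP; rewrite oner_eq0.
  exists (`|d|^-1 *: d); rewrite /S /= normrZ normfV normr_id mulVf //.
  by rewrite normr_eq0.
have Sc : compact S.
  apply: bounded_closed_compact.
    exists 1; split; first by rewrite num_real.
    by move=> y y1 x; rewrite /S /= => ->; apply: ltW.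
  have := @closed_eq R 1.
  move=> H; exact: (proj1 (continuous_closedP _) (@norm_continuous R ('rV[R]_m.+1 : normedModType R)) _ H).
have [c0 c0S c0min] := compact_EVT_min S0 Sc (@continuous_subspaceT _ _ S P Pcont).
have c0n : `|c0| = 1 by move: c0S; rewrite inE.
have p0 : 0 < P c0.
  rewrite lt_def P0 andbT; apply/eqP => /Pdef c00.
  by move: c0n; rewrite c00 normr0 => /eqP; rewrite eq_sym oner_eq0.
exists (P c0)^-1; split; first by rewrite invr_ge0 ltW.
move=> x i; apply: le_trans (xle x i) _.
have [->|x0] := eqVneq x 0; first by rewrite normr0 mulr_ge0 // invr_ge0 ltW.
have nx : 0 < `|x| by rewrite normr_gt0.
have := c0min (`|x|^-1 *: x).
rewrite PZ normfV normr_id inE /S /= normrZ normfV normr_id mulVf ?gt_eqF //.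
move=> /(_ erefl) H.
rewrite mulrC ler_pdivlMr //.
by rewrite -ler_pdivlMl // mulrC.
Qed.


Lemma normcE (R : rcfType) (x : R[i]) : `|x| = ((Normc.normc x)%:C)%C.
Proof. by []. Qed.

Lemma normc_ge0 (R : rcfType) (x : R[i]) : 0 <= Normc.normc x.
Proof. by case: x => a b; rewrite /Normc.normc sqrtr_ge0. Qed.

Lemma normcD (R : rcfType) (x y : R[i]) :
  Normc.normc (x + y) <= Normc.normc x + Normc.normc y.
Proof. by rewrite -lecR rmorphD -!normcE ler_normD. Qed.

Lemma normcM (R : rcfType) (x y : R[i]) :
  Normc.normc (x * y) = Normc.normc x * Normc.normc y.
Proof. exact: Normc.normcM. Qed.

Lemma normcR (R : rcfType) (r : R) : Normc.normc ((r%:C)%C) = `|r|.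
Proof. by rewrite /Normc.normc /= expr0n /= addr0 sqrtr_sqr. Qed.

Lemma normc0' (R : rcfType) : Normc.normc (0 : R[i]) = 0.
Proof. exact: Normc.normc0. Qed.

Lemma normc_le (R : rcfType) (a b : R) : Normc.normc (Complex a b) <= `|a| + `|b|.
Proof.
rewrite /Normc.normc -(@ler_pXn2r _ 2) ?nnegrE ?sqrtr_ge0 ?addr_ge0 //.
have ha : forall c : R, `|c| ^+ 2 = c ^+ 2 by move=> c; rewrite -normrX ger0_norm ?sqr_ge0.
rewrite sqr_sqrtr ?addr_ge0 ?sqr_ge0 // sqrrD !ha -addrA lerD2l lerDr.
by rewrite mulrn_wge0 // mulr_ge0.
Qed.

Set Implicit Arguments. Unset Strict Implicit.

Section Lin.
Variables (K : comNzRingType) (U V : lmodType K).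
Implicit Types (f g : U -> V).

Lemma linB f : linear f -> forall x y, f (x - y) = f x - f y.
Proof. by move=> Lf; apply: zmod_morphism_linear. Qed.
Lemma lin0 f : linear f -> f 0 = 0.
Proof. by move=> Lf; rewrite -(subrr 0) linB // subrr. Qed.
Lemma linD f : linear f -> forall x y, f (x + y) = f x + f y.
Proof.
move=> Lf x y; have fN : f (- y) = - f y by rewrite -sub0r linB // lin0 // sub0r.
by rewrite -[y in LHS]opprK linB // fN opprK.
Qed.
Lemma linZ f : linear f -> forall a x, f (a *: x) = a *: f x.
Proof. by move=> Lf; apply: scalable_linear. Qed.
Lemma lin_sum f (I : Type) (r : seq I) (F : I -> U) : linear f ->
  f (\sum_(i <- r) F i) = \sum_(i <- r) f (F i).
Proof.
move=> Lf; elim: r => [|a r IH]; first by rewrite !big_nil lin0.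
by rewrite !big_cons linD // IH.
Qed.

Lemma linear_of f : (forall x y, f (x + y) = f x + f y) -> (forall a x, f (a *: x) = a *: f x) -> linear f.
Proof. by move=> HD HZ a x y; rewrite HD HZ. Qed.

Lemma lin_addf f g : linear f -> linear g -> linear (fun x => f x + g x).
Proof.
move=> Lf Lg; apply: linear_of => [x y|a x]; first by rewrite !linD // addrACA.
by rewrite !linZ // scalerDr.
Qed.
Lemma lin_subf f g : linear f -> linear g -> linear (fun x => f x - g x).
Proof.
move=> Lf Lg; apply: linear_of => [x y|a x]; first by rewrite !linD // opprD addrACA.
by rewrite !linZ // scalerBr.
Qed.
Lemma lin_scalef f (c : K) : linear f -> linear (fun x => c *: f x).
Proof.
move=> Lf; apply: linear_of => [x y|a x]; first by rewrite !linD // scalerDr.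
by rewrite !linZ // !scalerA mulrC.
Qed.
Lemma lin_sumf (I : Type) (r : seq I) (F : I -> U -> V) :
  (forall i, linear (F i)) -> linear (fun x => \sum_(i <- r) F i x).
Proof.
move=> LF; apply: linear_of => [x y|a x].
  by rewrite -big_split /=; apply: eq_bigr => i _; rewrite linD.
by rewrite scaler_sumr; apply: eq_bigr => i _; rewrite linZ.
Qed.
End Lin.

Lemma lin_comp (K : comNzRingType) (U V W : lmodType K) (f : V -> W) (g : U -> V) :
  linear f -> linear g -> linear (fun x => f (g x)).
Proof. by move=> Lf Lg a x y; rewrite Lg Lf. Qed.

Lemma lin_iter (K : comNzRingType) (U : lmodType K) (f : U -> U) k :
  linear f -> linear (iter k f).
Proof.
move=> Lf; elim: k => [|k IH] a x y //=.
by rewrite IH Lf.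
Qed.

Definition dec2 (R : rcfType) n (w : 'rV[R]_(n*n + n*n)) : 'M[R[i]]_n :=
  \matrix_(k, l) Complex (w 0 (lshift (n*n) (mxvec_index k l)))
                         (w 0 (rshift (n*n) (mxvec_index k l))).
Definition enc (R : rcfType) n (X : 'M[R[i]]_n) : 'rV[R]_(n*n+n*n) :=
  row_mx (mxvec (map_mx (@complex.Re R) X)) (mxvec (map_mx (@complex.Im R) X)).

Arguments dec2 {R n}.
Arguments enc {R n}.

Lemma dec2E (R : rcfType) n (w : 'rV[R]_(n*n + n*n)) k l :
  dec2 w k l = Complex (w 0 (lshift (n*n) (mxvec_index k l)))
                       (w 0 (rshift (n*n) (mxvec_index k l))).
Proof. by rewrite mxE. Qed.

Lemma dec2D (R : rcfType) n (w1 w2 : 'rV[R]_(n*n + n*n)) :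
  dec2 (w1 + w2) = dec2 w1 + dec2 w2.
Proof. by apply/matrixP => k l; rewrite !mxE. Qed.

Lemma dec2Z (R : rcfType) n (r : R) (w : 'rV[R]_(n*n + n*n)) :
  dec2 (r *: w) = (r%:C)%C *: dec2 w.
Proof.
apply/matrixP => k l; rewrite !mxE /=; apply/eqP; rewrite eq_complex /=.
by apply/andP; split; apply/eqP; ring.
Qed.

Lemma dec2K (R : rcfType) n (X : 'M[R[i]]_n) : dec2 (enc X) = X.
Proof.
apply/matrixP => k l; rewrite dec2E /enc row_mxEl row_mxEr !mxvecE !mxE.
by case: (X k l).
Qed.

Lemma dec2_eq0 (R : rcfType) n (w : 'rV[R]_(n*n + n*n)) : dec2 w = 0 -> w = 0.
Proof.
move=> /matrixP H; apply/matrixP => a q; rewrite (ord1 a) mxE.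
case: (splitP q) => p hp.
  have -> : q = lshift (n*n) p by apply/val_inj.
  by case/mxvec_indexP: p {hp} => k l; have := H k l; rewrite dec2E mxE => [[]].
have -> : q = rshift (n*n) p by apply/val_inj.
by case/mxvec_indexP: p {hp} => k l; have := H k l; rewrite dec2E mxE => [[]].
Qed.

Lemma F1 (R : realType) n (N : 'M[R[i]]_n -> R) : is_norm N ->
  exists c : R, 0 <= c /\ forall (X : 'M[R[i]]_n) k l, Normc.normc (X k l) <= c * N X.
Proof.
case=> N0 Ndef NZ ND.
have [c [c0 Hc]] := @coord_bound R (n*n + n*n) (fun w => N (dec2 w)) (fun w => N0 _)
   (fun w H => dec2_eq0 (Ndef _ H))
   (fun r w => ltac:(by rewrite /= dec2Z NZ normcR))
   (fun x y => ltac:(by rewrite /= dec2D ND)).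
exists (c + c); split; first by rewrite addr_ge0.
move=> X k l; rewrite -[X]dec2K dec2E mulrDl.
apply: le_trans (normc_le _ _ _) _.
by apply: lerD; apply: Hc.
Qed.

Lemma coord_boundM (R : realType) a b (P : 'M[R]_(a, b) -> R) :
 (forall x, 0 <= P x) -> (forall x, P x = 0 -> x = 0) ->
 (forall (r : R) x, P (r *: x) = `|r| * P x) -> (forall x y, P (x + y) <= P x + P y) ->
 exists c : R, 0 <= c /\ forall (W : 'M[R]_(a, b)) i j, `|W i j| <= c * P W.
Proof.
move=> P0 Pdef PZ PD.
have [c [c0 Hc]] := @coord_bound R (a * b) (fun w => P (vec_mx w)) (fun w => P0 _)
   (fun w H => ltac:(by have := congr1 mxvec (Pdef _ H); rewrite vec_mxK linear0))
   (fun r w => ltac:(by rewrite /= linearZ PZ))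
   (fun x y => ltac:(by rewrite /= linearD PD)).
exists c; split => // W i j.
by have := Hc (mxvec W) (mxvec_index i j); rewrite mxvecE mxvecK.
Qed.

Lemma sum_delta (K : pzRingType) (V : lmodType K) n (i j : 'I_n) (F : 'I_n -> 'I_n -> V) :
  \sum_(a < n) \sum_(b < n) (delta_mx i j : 'M[K]_n) a b *: F a b = F i j.
Proof.
rewrite (bigD1 i) //= (bigD1 j) //= mxE !eqxx scale1r big1 => [|b nb].
  rewrite addr0 big1 ?addr0 // => a na; apply: big1 => b _.
  by rewrite mxE (negbTE na) scale0r.
by rewrite mxE eqxx (negbTE nb) scale0r.
Qed.

Definition decL (R : rcfType) n (W : 'M[R]_(n*n, n*n+n*n)) : 'M[R[i]]_n -> 'M[R[i]]_n :=
  fun X => \sum_(i < n) \sum_(j < n) X i j *: dec2 (row (mxvec_index i j) W).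

Lemma lin_entry (R : rcfType) n (i j : 'I_n) (D : 'M[R[i]]_n) :
  linear (fun X : 'M[R[i]]_n => X i j *: D).
Proof.
apply: linear_of => [X Y|a X]; first by rewrite mxE scalerDl.
by rewrite mxE scalerA.
Qed.

Lemma lin_decL (R : rcfType) n (W : 'M[R]_(n*n, n*n+n*n)) : linear (decL W).
Proof.
apply: lin_sumf => i; apply: lin_sumf => j; exact: lin_entry.
Qed.

Lemma decL_eq0 (R : rcfType) n (W : 'M[R]_(n*n, n*n+n*n)) :
  (forall X, decL W X = 0) -> W = 0.
Proof.
move=> H; apply/row_matrixP => r; rewrite row0.
case/mxvec_indexP: r => i j; apply: dec2_eq0.
by have := H (delta_mx i j); rewrite /decL sum_delta.
Qed.

Lemma F2 (R : realType) n (Nop : ('M[R[i]]_n -> 'M[R[i]]_n) -> R) : is_map_norm Nop ->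
  exists c : R, 0 <= c /\ forall (G : 'M[R[i]]_n -> 'M[R[i]]_n), linear G -> forall i j k l,
    Normc.normc (G (delta_mx i j) k l) <= c * Nop G.
Proof.
case=> N0 Ndef NZ ND.
have PZ : forall (r : R) W, Nop (decL (r *: W)) = `|r| * Nop (decL W).
  move=> r W; rewrite -normcR -NZ; last exact: lin_decL.
  congr Nop; apply: funext => X.
  rewrite /decL scaler_sumr; apply: eq_bigr => i _; rewrite scaler_sumr.
  apply: eq_bigr => j _; rewrite linearZ /= dec2Z !scalerA mulrC //.
have PD : forall W1 W2, Nop (decL (W1 + W2)) <= Nop (decL W1) + Nop (decL W2).
  move=> W1 W2; apply: le_trans (ND _ _ (lin_decL _) (lin_decL _)).
  rewrite le_eqVlt; apply/orP; left; apply/eqP; congr Nop; apply: funext => X.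
  rewrite /decL -big_split; apply: eq_bigr => i _; rewrite -big_split.
  by apply: eq_bigr => j _; rewrite linearD /= dec2D scalerDr.
have [c [c0 Hc]] := @coord_boundM R (n*n) (n*n+n*n) (fun W => Nop (decL W))
   (fun W => N0 _ (lin_decL W))
   (fun W H => decL_eq0 (Ndef _ (lin_decL W) H)) PZ PD.
exists (c + c); split; first by rewrite addr_ge0.
move=> G LG i j k l.
pose W := \matrix_(r < n*n) enc (G (vec_mx (delta_mx 0 r))).
have hrow : forall i j, row (mxvec_index i j) W = enc (G (delta_mx i j)).
  by move=> i' j'; rewrite rowK vec_mx_delta.
have hG : decL W = G.
  apply: funext => X; rewrite /decL [in RHS](matrix_sum_delta X) lin_sum //.
  apply: eq_bigr => i' _; rewrite lin_sum //; apply: eq_bigr => j' _.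
  by rewrite hrow dec2K linZ.
have hrowE : forall r q, row r W 0 q = W r q by move=> r q; rewrite mxE.
rewrite -[G (delta_mx i j)]dec2K -hrow dec2E !hrowE mulrDl -hG.
apply: le_trans (normc_le _ _ _) _.
by apply: lerD; apply: Hc.
Qed.

Lemma N_sum (R : realType) n (N : 'M[R[i]]_n -> R) : is_norm N ->
  forall (I : Type) (r : seq I) (F : I -> 'M[R[i]]_n),
  N (\sum_(i <- r) F i) <= \sum_(i <- r) N (F i).
Proof.
case=> N0 Ndef NZ ND I r F; elim: r => [|a r IH].
  by rewrite !big_nil -(scale0r (0 : 'M[R[i]]_n)) NZ normc0' mul0r.
by rewrite !big_cons (le_trans (ND _ _)) // lerD2l.
Qed.

Lemma lin_id (K : comNzRingType) (U : lmodType K) : linear (fun x : U => x).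
Proof. by []. Qed.

Lemma Nop_sum (R : realType) n (Nop : ('M[R[i]]_n -> 'M[R[i]]_n) -> R) : is_map_norm Nop ->
  forall (I : Type) (r : seq I) (F : I -> 'M[R[i]]_n -> 'M[R[i]]_n),
  (forall i, linear (F i)) ->
  Nop (fun X => \sum_(i <- r) F i X) <= \sum_(i <- r) Nop (F i).
Proof.
case=> N0 Ndef NZ ND I r F LF; elim: r => [|a r IH].
  have -> : (fun X : 'M[R[i]]_n => \sum_(i <- [::]) F i X) = (fun X => 0 *: X).
    by apply: funext => X; rewrite big_nil scale0r.
  by rewrite NZ ?normc0' ?mul0r ?big_nil //; apply: lin_id.
have -> : (fun X : 'M[R[i]]_n => \sum_(i <- a :: r) F i X) =
          (fun X => F a X + \sum_(i <- r) F i X).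
  by apply: funext => X; rewrite big_cons.
rewrite big_cons; apply: le_trans (ND _ _ (LF a) (lin_sumf _ LF)) _.
by rewrite lerD2l; exact: IH.
Qed.

Lemma Nop_sum2 (R : realType) n (Nop : ('M[R[i]]_n -> 'M[R[i]]_n) -> R) : is_map_norm Nop ->
  forall (F : 'I_n -> 'I_n -> 'M[R[i]]_n -> 'M[R[i]]_n),
  (forall i j, linear (F i j)) ->
  Nop (fun X => \sum_(i < n) \sum_(j < n) F i j X) <= \sum_(i < n) \sum_(j < n) Nop (F i j).
Proof.
move=> HN F LF.
have := @Nop_sum R n Nop HN _ (index_enum 'I_n) (fun i X => \sum_(j < n) F i j X) (fun i => lin_sumf _ (LF i)).
move=> H; apply: le_trans H _.
by apply: ler_sum => i _; apply: Nop_sum.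
Qed.

Lemma F3 (R : realType) n (N : 'M[R[i]]_n -> R) : is_norm N -> forall Y,
  N Y <= \sum_(k < n) \sum_(l < n) Normc.normc (Y k l) * N (delta_mx k l).
Proof.
move=> HN Y; have [_ _ NZ _] := HN.
rewrite {1}(matrix_sum_delta Y); apply: le_trans (N_sum HN _ _) _.
apply: ler_sum => k _; apply: le_trans (N_sum HN _ _) _.
by apply: ler_sum => l _; rewrite NZ.
Qed.

Lemma le_sum_elem (R : realType) (I : finType) (F : I -> R) i :
  (forall j, 0 <= F j) -> F i <= \sum_j F j.
Proof. by move=> F0; rewrite (bigD1 i) //= lerDl sumr_ge0. Qed.

Lemma F2' (R : realType) n (N : 'M[R[i]]_n -> R) (Nop : ('M[R[i]]_n -> 'M[R[i]]_n) -> R) :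
  is_norm N -> is_map_norm Nop ->
  exists c : R, 0 <= c /\ forall (Z : 'M[R[i]]_n) (E : 'M[R[i]]_n -> 'M[R[i]]_n), linear E ->
    N (E Z) <= (\sum_(a < n) \sum_(b < n) Normc.normc (Z a b)) * (c * Nop E).
Proof.
move=> HN HNop; have [N0 _ NZ _] := HN; have [Nop0 _ _ _] := HNop.
have [cL [cL0 HcL]] := F2 HNop.
pose D := \sum_(k < n) \sum_(l < n) N (delta_mx k l).
have D0 : 0 <= D by apply: sumr_ge0 => k _; apply: sumr_ge0.
exists (cL * D); split; first by rewrite mulr_ge0.
move=> Z E LE.
have HEd : forall a b, N (E (delta_mx a b)) <= cL * D * Nop E.
  move=> a b; apply: le_trans (F3 HN _) _.
  rewrite [_ * Nop E]mulrC mulrA /D mulr_sumr; apply: ler_sum => k _.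
  rewrite mulr_sumr; apply: ler_sum => l _.
  rewrite ler_wpM2r //; rewrite mulrC; exact: HcL.
rewrite {1}(matrix_sum_delta Z) lin_sum //.
apply: le_trans (N_sum HN _ _) _.
rewrite mulr_suml; apply: ler_sum => a _.
rewrite lin_sum //; apply: le_trans (N_sum HN _ _) _.
rewrite mulr_suml; apply: ler_sum => b _.
rewrite (linZ LE) NZ; apply: ler_wpM2l; first exact: normc_ge0.
exact: HEd.
Qed.

Lemma F4 (R : realType) n (N : 'M[R[i]]_n -> R) (Nop : ('M[R[i]]_n -> 'M[R[i]]_n) -> R) :
  is_norm N -> is_map_norm Nop ->
  exists C : R, 0 <= C /\ forall (G : 'M[R[i]]_n -> 'M[R[i]]_n), linear G ->
    forall eta : R, 0 <= eta -> (forall i j, N (G (delta_mx i j)) <= eta) -> Nop G <= C * eta.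
Proof.
move=> HN HNop; have [Nop0 _ NopZ _] := HNop.
have [cN [cN0 HcN]] := F1 HN.
pose Dl i j k l := fun X : 'M[R[i]]_n => X i j *: (delta_mx k l : 'M[R[i]]_n).
pose S := \sum_(i < n) \sum_(j < n) \sum_(k < n) \sum_(l < n) Nop (Dl i j k l).
have S0 : 0 <= S.
  by do 4!(apply: sumr_ge0 => ? _); apply: Nop0; apply: lin_entry.
exists (cN * S); split; first by rewrite mulr_ge0.
move=> G LG eta eta0 HG.
pose FF i j := fun X => \sum_(k < n) \sum_(l < n) G (delta_mx i j) k l *: Dl i j k l X.
have hG : G = fun X => \sum_(i < n) \sum_(j < n) FF i j X.
  apply: funext => X; rewrite {1}(matrix_sum_delta X) lin_sum //.
  apply: eq_bigr => i _; rewrite lin_sum //; apply: eq_bigr => j _.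
  rewrite linZ // {1}(matrix_sum_delta (G (delta_mx i j))) scaler_sumr.
  apply: eq_bigr => k _; rewrite scaler_sumr; apply: eq_bigr => l _.
  by rewrite /Dl !scalerA mulrC.
rewrite hG; apply: le_trans (Nop_sum2 HNop (F := FF) _) _.
  move=> i j; rewrite /FF; apply: lin_sumf => k; apply: lin_sumf => l.
  by apply: lin_scalef; apply: lin_entry.
have -> : cN * S * eta = \sum_(i < n) \sum_(j < n) \sum_(k < n) \sum_(l < n)
    (cN * eta) * Nop (Dl i j k l).
  rewrite /S mulrAC big_distrr; apply: eq_bigr => i _; rewrite big_distrr.
  apply: eq_bigr => j _; rewrite big_distrr; apply: eq_bigr => k _.
  by rewrite big_distrr.
apply: ler_sum => i _; apply: ler_sum => j _.
apply: le_trans (Nop_sum2 HNop (F := fun k l X => G (delta_mx i j) k l *: Dl i j k l X) _) _.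
  by move=> k l; apply: lin_scalef; apply: lin_entry.
apply: ler_sum => k _; apply: ler_sum => l _.
rewrite NopZ; last exact: lin_entry.
rewrite ler_wpM2r //; first by apply: Nop0; apply: lin_entry.
apply: le_trans (HcN _ _ _) _.
by rewrite ler_wpM2l.
Qed.

Lemma frac_le (R : realType) (B x : R) : 0 <= B -> 0 <= x -> B * (x / (B + 1)) <= x.
Proof.
move=> B0 x0; have B1 : 0 < B + 1 by rewrite ltr_wpDl.
rewrite mulrA ler_pdivrMr //; nra.
Qed.

Lemma frac_lt (R : realType) (B x : R) : 0 <= B -> 0 < x -> B * (x / (B + 1)) < x.
Proof.
move=> B0 x0; have B1 : 0 < B + 1 by rewrite ltr_wpDl.
rewrite mulrA ltr_pdivrMr //; nra.
Qed.

Lemma iter_contr (R : realType) n (N : 'M[R[i]]_n -> R) (phi : 'M[R[i]]_n -> 'M[R[i]]_n) :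
  (forall X, N (phi X) <= N X) -> forall m Y, N (iter m phi Y) <= N Y.
Proof.
move=> H; elim=> [|m IH] Y //=; apply: le_trans (H _) _; exact: IH.
Qed.

Theorem mainTheorem7 (R : realType) (n : nat)
    (N : 'M[R[i]]_n -> R) (Nop : ('M[R[i]]_n -> 'M[R[i]]_n) -> R)
    (phi psi : 'M[R[i]]_n -> 'M[R[i]]_n) :
  is_norm N -> is_map_norm Nop ->
  linear phi -> (forall X, N (phi X) <= N X) ->
  linear psi -> (forall X, psi (psi X) = psi X) ->
  limit_point_of_iterates Nop phi psi ->
  forall eps : R, 0 < eps -> exists K : nat, forall k : nat, (K <= k)%N ->
    Nop (fun X => iter k phi X - iter k phi (psi X)) < eps.
Proof.
move=> HN HNop Lphi Hcon Lpsi Hidem Hlim eps eps0.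
have [Nop0 _ _ _] := HNop.
have [C [C0 HC]] := F4 HN HNop.
have [c [c0 Hc]] := F2' HN HNop.
pose Z i j := (delta_mx i j : 'M[R[i]]_n) - psi (delta_mx i j).
pose S i j := \sum_(a < n) \sum_(b < n) Normc.normc (Z i j a b).
have S0 : forall i j, 0 <= S i j.
  by move=> i j; apply: sumr_ge0 => a _; apply: sumr_ge0 => b _; apply: normc_ge0.
pose Bt := c * \sum_(i < n) \sum_(j < n) S i j.
have Bt0 : 0 <= Bt by rewrite mulr_ge0 // sumr_ge0 // => i _; apply: sumr_ge0.
pose eta := eps / (C + 1).
have eta0 : 0 < eta by rewrite divr_gt0 // ltr_wpDl.
pose eta' := eta / (Bt + 1).
have eta'0 : 0 < eta' by rewrite divr_gt0 // ltr_wpDl.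
have [k0 [_ _ Hk0]] := Hlim eta' eta'0 0%N.
exists k0 => k hk.
pose E := fun x => iter k0 phi x - psi x.
have LE : linear E by apply: lin_subf; [apply: lin_iter | ].
have LA : linear (fun X => iter k phi X - iter k phi (psi X)).
  by apply: lin_subf; [apply: lin_iter | apply: lin_comp => //; apply: lin_iter].
apply: le_lt_trans (HC _ LA eta (ltW eta0) _) _; last exact: frac_lt.
move=> i j.
have Lk := lin_iter k Lphi.
rewrite -(linB Lk) -/(Z i j) -(subnK hk) iterD.
apply: le_trans (iter_contr Hcon _ _) _.
have -> : iter k0 phi (Z i j) = E (Z i j).
  by rewrite /E /Z (linB Lpsi) Hidem subrr subr0.
apply: le_trans (Hc (Z i j) E LE) _.
rewrite -/(S i j) mulrA [S i j * c]mulrC.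
apply: le_trans (frac_le Bt0 (ltW eta0)).
apply: (@le_trans _ _ (Bt * Nop E)).
  apply: ler_wpM2r; first exact: Nop0.
  rewrite /Bt ler_wpM2l //.
  apply: le_trans (le_sum_elem (F := fun i => \sum_(j < n) S i j) i _) .
    by rewrite (le_sum_elem (F := fun j => S i j) j).
  by move=> i'; apply: sumr_ge0.
by rewrite ler_wpM2l // ltW.
Qed.
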